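(* (i) For every integer $k\ge1$, $\alpha_{\mathrm{od}}(Q_{4k})\ge2\sum_{i=1}^{k}\binom{4k-1}{2i-1}$. (ii) $\alpha_{\mathrm{od}}(Q_4)=6$, $\alpha_{\mathrm{od}}(Q_6)=24$, and $\alpha_{\mathrm{od}}(Q_8)=112$. (iii) For every even $d\ge8$, $\alpha_{\mathrm{od}}(Q_d)\ge\frac{7}{16}\cdot2^d$.
   Context: $Q_d$ is the $d$-dimensional hypercube: vertex set $\{0,1\}^d$, two vertices adjacent iff they differ in exactly one coordinate. An odd independent set in $G=(V,E)$ is an independent set $S$ such that every $v\in V\setminus S$ has either no neighbor or an odd number of neighbors in $S$; $\alpha_{\mathrm{od}}(G)$ is its maximum size. *)

(* Defs.v *)
From mathcomp Require Import all_boot.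
Set Implicit Arguments. Unset Strict Implicit. Unset Printing Implicit Defensive.

Section OddIndep.
Variables (T : finType) (e : rel T).

Definition nbrs_in (S : {set T}) (v : T) : {set T} := [set u in S | e v u].

Definition independent (S : {set T}) : bool :=
  [forall u in S, forall v in S, ~~ e u v].

Definition odd_independent (S : {set T}) : bool :=
  independent S &&
  [forall v in ~: S, (#|nbrs_in S v| == 0) || odd #|nbrs_in S v|].

Definition alpha_od : nat := \max_(S : {set T} | odd_independent S) #|S|.
End OddIndep.

Definition cube (d : nat) := {ffun 'I_d -> bool}.
Definition cube_adj (d : nat) : rel (cube d) :=
  fun x y => #|[set i : 'I_d | x i != y i]| == 1.

Definition alpha_od_Q (d : nat) : nat := @alpha_od (cube d) (@cube_adj d).

(* Main.v *)
From Stdlib Require Import PeanoNat.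
Require Import Defs.
From mathcomp Require Import all_boot zify.
Set Implicit Arguments. Unset Strict Implicit. Unset Printing Implicit Defensive.


Section Gen.
Variables (T : finType) (e : rel T).

Lemma card_sep (A : {set T}) (P : pred T) :
  #|[set u in A | P u]| = \sum_(u in A) P u.
Proof.
rewrite -sum1_card [LHS]big_mkcond [RHS]big_mkcond /=.
apply: eq_bigr => u _; rewrite inE; by case: (u \in A); case: (P u).
Qed.

Lemma card_setp (P : pred T) : #|[set u | P u]| = \sum_u P u.
Proof.
rewrite -sum1_card [LHS]big_mkcond /=.
apply: eq_bigr => u _; rewrite inE; by case: (P u).
Qed.

Lemma sum_in (A B : {set T}) : B \subset A -> \sum_(t in A) (t \in B) = #|B|.
Proof.
move=> sub; rewrite -(card_sep A (fun u => u \in B)).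
have -> : [set u in A | u \in B] = B; last by [].
apply/setP => x; rewrite !inE.
case: (boolP (x \in B)) => xB; rewrite ?andbT ?andbF //; by rewrite (subsetP sub x xB).
Qed.

Lemma odd_indepP S : odd_independent e S <->
  (forall x, x \in S -> #|nbrs_in e S x| = 0) /\
  (forall x, x \notin S -> #|nbrs_in e S x| = 0 \/ odd #|nbrs_in e S x|).
Proof.
rewrite /odd_independent /independent; split.
- case/andP => /forallP Hi /forallP Ho; split.
  + move=> x xS; apply/eqP; rewrite cards_eq0; apply/eqP/setP => u; rewrite !inE.
    apply/negbTE/andP => [[uS exu]]; move: (Hi x); rewrite xS /= => /forallP /(_ u).
    by rewrite uS exu.
  + move=> x xS; move: (Ho x); rewrite inE xS /= => /orP [/eqP->|->]; [left|right] => //.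
- case=> H1 H2; apply/andP; split.
  + apply/forallP => u; apply/implyP => uS; apply/forallP => v; apply/implyP => vS.
    apply/negP => euv; have := H1 u uS; move/eqP; rewrite cards_eq0 => /eqP/setP/(_ v).
    by rewrite !inE vS euv.
  + apply/forallP => x; apply/implyP; rewrite inE => xS.
    case: (H2 x xS) => [->|->] //; by rewrite orbT.
Qed.

Definition Zset S := [set t in ~: S | #|nbrs_in e S t| == 0].
Definition Fset d S := [set t in ~: S | #|nbrs_in e S t| == d.-1].

Variable d : nat.
Hypothesis esym : symmetric e.
Hypothesis edeg : forall x, #|[set y | e x y]| = d.
Hypothesis e4 : forall t u y, e t u -> e u y -> y != t ->
  exists2 w, e t w & (e w y && (w != u)).

Section WithS.
Variable S : {set T}.
Hypothesis HS : odd_independent e S.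

Lemma indep_nb x y : x \in S -> e x y -> y \notin S.
Proof.
move=> xS exy; apply/negP => yS; have [H1 _] := (odd_indepP S).1 HS.
have := H1 x xS; move/eqP; rewrite cards_eq0 => /eqP/setP/(_ y).
by rewrite !inE yS exy.
Qed.

Lemma sum_c : \sum_(t in ~: S) #|nbrs_in e S t| = d * #|S|.
Proof.
under eq_bigr => t _ do rewrite /nbrs_in card_sep.
rewrite exchange_big /= [RHS]mulnC -sum_nat_const; apply: eq_bigr => u uS.
rewrite -(edeg u) card_setp big_mkcond /=; apply: eq_bigr => t _.
rewrite inE esym; case: (boolP (t \in S)) => tS //=.
by rewrite (contraTF (indep_nb uS) tS).
Qed.

Lemma c_le x : #|nbrs_in e S x| <= d.
Proof.
rewrite -(edeg x); apply: subset_leq_card; apply/subsetP => y; rewrite !inE.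
by case/andP.
Qed.

Hypothesis deven : ~~ odd d.
Hypothesis d4 : 4 <= d.

Lemma pointwise t : t \notin S ->
  #|nbrs_in e S t| + (d - 3) * (t \in Zset S) <= (d - 3) + 2 * (t \in Fset d S).
Proof.
move=> tS; rewrite !inE tS /=.
have [_ H2] := (odd_indepP S).1 HS; have := H2 t tS; have := c_le t.
move: #|nbrs_in e S t| => k Hle [->|ok].
  have -> : (0 == d.-1) = false by apply/negbTE; lia.
  rewrite /=; lia.
case: (eqVneq k d.-1) => [->|ne].
  have -> : (d.-1 == 0) = false by apply/negbTE; lia.
  rewrite /=; lia.
have -> : (k == 0) = false by apply/negbTE; apply: contraTneq ok => ->.
rewrite /=.
have h1 := odd_double_half k; have h2 := odd_double_half d.
rewrite ok (negbTE deven) -!mul2n in h1 h2.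
rewrite muln0 addn0 muln0 addn0. move: ne => /eqP ne. lia.
Qed.

Lemma sum_ineq :
  d * #|S| + (d - 3) * #|Zset S| <= (d - 3) * #|~: S| + 2 * #|Fset d S|.
Proof.
have H : \sum_(t in ~: S) (#|nbrs_in e S t| + (d - 3) * (t \in Zset S)) <=
         \sum_(t in ~: S) ((d - 3) + 2 * (t \in Fset d S)).
  by apply: leq_sum => t; rewrite inE => tS; exact: pointwise.
rewrite !big_split /= -!big_distrr /= sum_nat_const sum_c in H.
rewrite !sum_in in H; last 2 first.
- by apply/subsetP => x; rewrite inE => /andP[].
- by apply/subsetP => x; rewrite inE => /andP[].
move: H; rewrite big1_eq; lia.
Qed.

Lemma F_nb t : t \in Fset d S -> exists u, e t u && (u \in Zset S).
Proof.
rewrite inE => /andP[]; rewrite inE => tS /eqP ct.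
have [u /andP[etu uS]] : exists u, e t u && (u \notin S).
  apply/existsP; apply: contraT; rewrite negb_exists => /forallP H.
  have : [set y | e t y] \subset nbrs_in e S t.
    apply/subsetP => y; rewrite !inE => ety; move: (H y); rewrite ety /= negbK => ->.
    by [].
  move/subset_leq_card; rewrite edeg ct; lia.
exists u; rewrite etu !inE uS /=; rewrite cards_eq0; apply/eqP/setP => y.
rewrite !inE; apply/negbTE/andP => [[yS euy]].
have ynt : y != t by apply: contraTneq yS => ->.
have [w etw /andP[ewy wnu]] := e4 etu euy ynt.
have wS : w \in S.
  apply: contraT => wS.
  have hA : #|[set y | e t y] :&: S| + #|[set y | e t y] :\: S| = d
    by rewrite cardsID edeg.
  have hB : [set y | e t y] :&: S = nbrs_in e S t
    by apply/setP => x; rewrite !inE andbC.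
  have hC : [set u; w] \subset [set y | e t y] :\: S.
    by apply/subsetP => x; rewrite !inE => /orP[] /eqP ->; rewrite ?etu ?uS ?etw ?wS.
  move/subset_leq_card: hC; rewrite cards2 eq_sym wnu hB ct in hA *.
  lia.
by move: (indep_nb wS ewy); rewrite yS.
Qed.

Lemma F_bound : #|Fset d S| <= \sum_(z in Zset S) #|[set t in Fset d S | e z t]|.
Proof.
rewrite -sum1_card.
apply: (@leq_trans (\sum_(t in Fset d S) \sum_(z in Zset S) e t z)).
  apply: leq_sum => t tF; have [u /andP[etu uZ]] := F_nb tF.
  by rewrite (bigD1 u) //= etu.
rewrite exchange_big /=; apply: leq_sum => z zZ; rewrite card_sep.
by apply/eq_leq/eq_bigr => t _; rewrite esym.
Qed.

Lemma k_le z : #|[set t in Fset d S | e z t]| <= d.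
Proof.
rewrite -(edeg z); apply: subset_leq_card; apply/subsetP => y; rewrite !inE.
by case/andP.
Qed.

Lemma FZ_le : #|Fset d S| + #|Zset S| <= #|~: S|.
Proof.
rewrite -cardsUI.
have -> : Fset d S :&: Zset S = set0.
  apply/setP => x; rewrite !inE; apply/negbTE; apply/andP => [[/andP[_ /eqP a] /andP[_ /eqP b]]].
  move: a; rewrite b; lia.
rewrite cards0 addn0; apply: subset_leq_card; apply/subsetP => x.
by rewrite !inE => /orP[] /andP[].
Qed.

End WithS.
End Gen.

Section Cube.
Variable d : nat.
Definition flip (x : cube d) (i : 'I_d) : cube d :=
  [ffun j => if j == i then ~~ x j else x j].

Lemma flip_inj (x : cube d) : injective (flip x).
Proof.
move=> i j /ffunP/(_ i); rewrite !ffunE eqxx; case: (eqVneq i j) => // _.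
by case: (x i).
Qed.

Lemma flipC x i j : flip (flip x i) j = flip (flip x j) i.
Proof. apply/ffunP => k; rewrite !ffunE; by case: (k == i); case: (k == j). Qed.

Lemma flipK x i : flip (flip x i) i = x.
Proof. apply/ffunP => k; rewrite !ffunE; case: eqP => // _; by rewrite negbK. Qed.

Lemma cube_adjP (x y : cube d) : reflect (exists i, y = flip x i) (cube_adj x y).
Proof.
apply: (iffP cards1P) => [[i Hi]|[i ->]]; [exists i|].
- apply/ffunP => j; rewrite ffunE; move/setP: Hi => /(_ j); rewrite !inE.
  case: (eqVneq j i) => [->|ne] /=.
    by move: (x i) (y i) => [] [].
  by move/negbFE/eqP.
- exists i; apply/setP => j; rewrite !inE !ffunE.
  case: (eqVneq j i) => [->|ne] /=; first by case: (x i).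
  by rewrite eqxx.
Qed.

Lemma card_nbr (x : cube d) : #|[set y | cube_adj x y]| = d.
Proof.
have -> : [set y | cube_adj x y] = flip x @: setT.
  apply/setP => y; rewrite inE; apply/cube_adjP/imsetP => [[i ->]|[i _ ->]]; by exists i.
by rewrite card_imset ?cardsT ?card_ord //; exact: flip_inj.
Qed.

Lemma cube_adj_sym : symmetric (@cube_adj d).
Proof.
move=> x y; apply/cube_adjP/cube_adjP => [[i ->]|[i ->]]; exists i; by rewrite flipK.
Qed.

Lemma cube_e4 (t u y : cube d) : cube_adj t u -> cube_adj u y -> y != t ->
  exists2 w, cube_adj t w & (cube_adj w y && (w != u)).
Proof.
case/cube_adjP => i -> /cube_adjP [j ->] ne.
have nij : j != i by apply: contraNneq ne => ->; rewrite flipK.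
exists (flip t j); first by apply/cube_adjP; exists j.
apply/andP; split; first by apply/cube_adjP; exists i; rewrite flipC.
by apply/negP => /eqP/flip_inj/eqP; apply/negP.
Qed.

Lemma card_cube : #|cube d| = 2 ^ d.
Proof. by rewrite card_ffun card_bool card_ord. Qed.

Lemma card_nbA (A : {set cube d}) (x : cube d) :
  #|[set u in A | cube_adj x u]| = \sum_(i < d) (flip x i \in A).
Proof.
have -> : [set u in A | cube_adj x u] = flip x @: [set i | flip x i \in A].
  apply/setP => y; rewrite inE; apply/andP/imsetP => [[yA /cube_adjP [i ey]]|[i]].
    by exists i; rewrite // inE -ey.
  rewrite inE => iA ->; split => //; apply/cube_adjP; by exists i.
by rewrite card_imset ?card_setp //; exact: flip_inj.
Qed.
End Cube.

Lemma ub4 (S : {set cube 4}) : odd_independent (@cube_adj 4) S -> #|S| <= 6.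
Proof.
move=> HS.
have h1 := sum_ineq (@cube_adj_sym 4) (@card_nbr 4) HS isT isT.
have h2 := F_bound (@cube_adj_sym 4) (@card_nbr 4) (@cube_e4 4) HS isT isT.
have h3 := FZ_le (d:=4) HS isT isT.
have h4 : \sum_(z in Zset (@cube_adj 4) S) #|[set t in Fset (@cube_adj 4) 4 S | cube_adj z t]|
    <= #|Zset (@cube_adj 4) S| * 4.
  by rewrite -sum_nat_const; apply: leq_sum => z _; exact: k_le (@card_nbr 4) _ _.
have h5 : #|S| + #|~: S| = 16 by rewrite cardsC card_cube.
move: h1 h2 h3 h4 h5; set m := \sum_(z in _) _; set f := #|Fset _ _ _|; set z := #|Zset _ _|.
move: #|S| #|~: S| => s t; lia.
Qed.

Lemma ub8 (S : {set cube 8}) : odd_independent (@cube_adj 8) S -> #|S| <= 112.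
Proof.
move=> HS.
have h1 := sum_ineq (@cube_adj_sym 8) (@card_nbr 8) HS isT isT.
have h2 := F_bound (@cube_adj_sym 8) (@card_nbr 8) (@cube_e4 8) HS isT isT.
have h3 := FZ_le (d:=8) HS isT isT.
have h4 : \sum_(z in Zset (@cube_adj 8) S) #|[set t in Fset (@cube_adj 8) 8 S | cube_adj z t]|
    <= #|Zset (@cube_adj 8) S| * 8.
  by rewrite -sum_nat_const; apply: leq_sum => z _; exact: k_le (@card_nbr 8) _ _.
have h5 : #|S| + #|~: S| = 256 by rewrite cardsC card_cube.
move: h1 h2 h3 h4 h5; set m := \sum_(z in _) _; set f := #|Fset _ _ _|; set z := #|Zset _ _|.
move: #|S| #|~: S| => s t; lia.
Qed.

Lemma ub6_case (S : {set cube 6}) : odd_independent (@cube_adj 6) S -> 24 < #|S| ->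
  exists2 z, z \in Zset (@cube_adj 6) S &
     3 < #|[set t in Fset (@cube_adj 6) 6 S | cube_adj z t]|.
Proof.
move=> HS big.
case: (boolP [exists z in Zset (@cube_adj 6) S,
     3 < #|[set t in Fset (@cube_adj 6) 6 S | cube_adj z t]|]).
  by case/exists_inP => z zZ kz; exists z.
rewrite negb_exists_in => /forall_inP Hk.
have h1 := sum_ineq (@cube_adj_sym 6) (@card_nbr 6) HS isT isT.
have h2 := F_bound (@cube_adj_sym 6) (@card_nbr 6) (@cube_e4 6) HS isT isT.
have h3 := FZ_le (d:=6) HS isT isT.
have h4 : \sum_(z in Zset (@cube_adj 6) S) #|[set t in Fset (@cube_adj 6) 6 S | cube_adj z t]|
    <= #|Zset (@cube_adj 6) S| * 3.
  by rewrite -sum_nat_const; apply: leq_sum => z zZ; move: (Hk z zZ); rewrite ltnNge negbK.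
have h5 : #|S| + #|~: S| = 64 by rewrite cardsC card_cube.
move: big h1 h2 h3 h4 h5; set m := \sum_(z in _) _; set f := #|Fset _ _ _|; set z := #|Zset _ _|.
move: #|S| #|~: S| => s t; lia.
Qed.

Definition nb (d v : nat) : seq nat := map (fun i => Nat.lxor v (Nat.pow 2 i)) (iota 0 d).
Definition dec d (v : nat) : cube d := [ffun i : 'I_d => Nat.testbit v i].

Lemma pow2E n : Nat.pow 2 n = 2 ^ n.
Proof. by elim: n => // n IH; rewrite expnS -IH. Qed.

Lemma flip_dec d v (i : 'I_d) : flip (dec d v) i = dec d (Nat.lxor v (Nat.pow 2 i)).
Proof.
apply/ffunP => j; rewrite !ffunE Nat.lxor_spec Nat.pow2_bits_eqb.
case: (eqVneq j i) => [->|ne]; first by rewrite Nat.eqb_refl; case: Nat.testbit.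
have -> : (i =? j) = false.
  by apply/Nat.eqb_neq => h; move/eqP: ne; apply; apply: val_inj.
by rewrite Bool.xorb_false_r.
Qed.

Lemma dec_mod d w : dec d w = dec d (w mod Nat.pow 2 d).
Proof. by apply/ffunP => i; rewrite !ffunE Nat.mod_pow2_bits_low //; apply/ltP. Qed.

Lemma dec_inj d v u : v < 2 ^ d -> u < 2 ^ d -> dec d v = dec d u -> v = u.
Proof.
move=> hv hu /ffunP H; apply: Nat.bits_inj => n.
case: (ltnP n d) => hn.
  by have := H (Ordinal hn); rewrite !ffunE.
rewrite -pow2E in hv hu.
rewrite -(Nat.mod_small v (Nat.pow 2 d)); last by apply/ltP.
rewrite -(Nat.mod_small u (Nat.pow 2 d)); last by apply/ltP.
by rewrite !Nat.mod_pow2_bits_high //; apply/leP.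
Qed.

Lemma dec_uniq d : uniq (map (dec d) (iota 0 (2 ^ d))).
Proof.
rewrite map_inj_in_uniq ?iota_uniq // => v u; rewrite !mem_iota /= !add0n => hv hu.
exact: dec_inj.
Qed.

Lemma dec_all d (x : cube d) : x \in map (dec d) (iota 0 (2 ^ d)).
Proof.
have E : #|map (dec d) (iota 0 (2 ^ d))| = #|cube d|.
  by rewrite (card_uniqP (dec_uniq d)) size_map size_iota card_cube.
move/(subset_cardP E): (subset_predT (mem (map (dec d) (iota 0 (2 ^ d))))) => H.
by rewrite H.
Qed.

Lemma dec_surj d (x : cube d) : exists2 v, v < 2 ^ d & dec d v = x.
Proof.
by case/mapP: (dec_all x) => v; rewrite mem_iota add0n => /andP[_ hv] ->; exists v.
Qed.

Lemma card_count d (A : {set cube d}) :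
  #|A| = count (fun v => dec d v \in A) (iota 0 (2 ^ d)).
Proof.
rewrite -(count_map (dec d) (mem A)) -size_filter.
rewrite -(card_uniqP (filter_uniq _ (dec_uniq d))).
by apply: eq_card => x; rewrite mem_filter dec_all andbT.
Qed.

Lemma sum_count n (P : pred nat) : \sum_(i < n) P i = count P (iota 0 n).
Proof.
elim: n => [|n IH]; first by rewrite big_ord0.
have -> : iota 0 n.+1 = iota 0 n ++ [:: n] by rewrite -(iotaD 0 n 1) addn1.
rewrite big_ord_recr IH count_cat /= addn0.
by [].
Qed.

Lemma nb_count d (A : {set cube d}) v :
  #|[set u in A | cube_adj (dec d v) u]| = count (fun w => dec d w \in A) (nb d v).
Proof.
rewrite card_nbA /nb count_map.
under eq_bigr => i _ do rewrite flip_dec.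
exact: (sum_count d (fun i => dec d (Nat.lxor v (Nat.pow 2 i)) \in A)).
Qed.

Definition get (a : seq (option bool)) v := nth None a v.
Definition okv d (a : seq (option bool)) (w : nat) : bool :=
  match get a w with
  | Some true => all (fun u => get a u != Some true) (nb d w)
  | Some false => if all (fun u => get a u != None) (nb d w) then
       let k := count (fun u => get a u == Some true) (nb d w) in (k == 0) || odd k else true
  | None => true end.
Definition consistent d a v := okv d a v && all (okv d a) (nb d v).
Definition bound (tgt : nat) (a : seq (option bool)) := tgt <= count (fun o => o != Some false) a.
Fixpoint search d tgt (ord : seq nat) a : bool :=
  match ord with
  | [::] => true
  | v :: ord' => match get a v with
     | Some _ => search d tgt ord' a
     | None =>
       if (if consistent d (set_nth None a v (Some true)) v
           then bound tgt (set_nth None a v (Some true)) else false) then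
         (if search d tgt ord' (set_nth None a v (Some true)) then true else
          if (if consistent d (set_nth None a v (Some false)) v
              then bound tgt (set_nth None a v (Some false)) else false)
          then search d tgt ord' (set_nth None a v (Some false)) else false)
       else
          if (if consistent d (set_nth None a v (Some false)) v
              then bound tgt (set_nth None a v (Some false)) else false)
          then search d tgt ord' (set_nth None a v (Some false)) else false
     end end.

Definition valid d (s : pred nat) := forall v,
  (s v -> count s (nb d v) = 0) /\
  (~~ s v -> count s (nb d v) = 0 \/ odd (count s (nb d v))).
Definition compat (s : pred nat) a := forall v b, get a v = Some b -> s v = b.

Section Sound.
Variables (d : nat) (s : pred nat).
Hypothesis V : valid d s.

Lemma okv_sound a w : compat s a -> okv d a w.
Proof.
move=> C; rewrite /okv; case E: (get a w) => [[]|] //.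
- have sw := C _ _ E; have [h _] := V w; have c0 := h sw.
  have : ~~ has s (nb d w) by rewrite has_count c0.
  move/hasPn => H; apply/allP => u un; apply/negP => /eqP gu.
  by move: (H u un); rewrite (C _ _ gu).
- case: (boolP (all _ _)) => // Hall /=.
  have sw := C _ _ E; have [_ h] := V w.
  rewrite (_ : count _ _ = count s (nb d w)).
    by case: (h (negbT sw)) => ->; rewrite ?eqxx ?orbT.
  apply: eq_in_count => u un; move: (allP Hall u un).
  case G: (get a u) => [b|] // _; rewrite /= (C _ _ G); by case: b G.
Qed.

Lemma consistent_sound a v : compat s a -> consistent d a v.
Proof. move=> C; rewrite /consistent (okv_sound _ C) /=; apply/allP => u _; exact: okv_sound C. Qed.

Lemma compat_set a v : compat s a -> compat s (set_nth None a v (Some (s v))).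
Proof.
move=> C u b; rewrite /get nth_set_nth /=; case: eqP => [-> [<-]|_] //; exact: C.
Qed.

Lemma bound_sound tgt a : compat s a -> tgt <= count s (iota 0 (size a)) -> bound tgt a.
Proof.
move=> C h; rewrite /bound -(mkseq_nth None a) /mkseq count_map.
apply: (leq_trans h); apply: sub_count => v /= sv; apply/eqP => G.
by move: (C _ _ G); rewrite sv.
Qed.

Lemma search_sound tgt N : tgt <= count s (iota 0 N) ->
  forall ord a, compat s a -> size a = N -> all (fun v => v < N) ord -> search d tgt ord a.
Proof.
move=> hc; elim => [|v ord IH] a C sz //= /andP[vN oN].
case G: (get a v) => [b|]; first exact: IH.
have szs b : size (set_nth None a v (Some b)) = N.
  by rewrite size_set_nth sz; apply/maxn_idPr.
have C' := compat_set (v:=v) C.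
have X : (if (if consistent d (set_nth None a v (Some (s v))) v
              then bound tgt (set_nth None a v (Some (s v))) else false)
          then search d tgt ord (set_nth None a v (Some (s v))) else false).
  by rewrite consistent_sound // bound_sound ?szs // IH.
case sv: (s v) X => X.
  case: (if consistent d (set_nth None a v (Some true)) v
         then bound tgt (set_nth None a v (Some true)) else false) X => // X.
  by rewrite X.
rewrite X.
by case: (search d tgt ord (set_nth None a v (Some true)));
   case: (if consistent d (set_nth None a v (Some true)) v
         then bound tgt (set_nth None a v (Some true)) else false).
Qed.
End Sound.

Definition setl (a : seq (option bool)) (l : seq (nat * bool)) :=
  foldl (fun a p => set_nth None a p.1 (Some p.2)) a l.

Lemma setl_get a L v b : get (setl a L) v = Some b -> (v, b) \in L \/ get a v = Some b.
Proof.
elim: L a => [|[w c] L IH] a /=; first by right.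
move/IH => [H|]; first by left; rewrite in_cons H orbT.
rewrite /get nth_set_nth /=; case: eqP => [-> [<-]|_ ->]; last by right.
by left; rewrite in_cons eqxx.
Qed.

Lemma compat_init s L n : (forall v b, (v, b) \in L -> s v = b) ->
  compat s (setl (nseq n None) L).
Proof.
move=> H v b /setl_get [/H //|]; by rewrite /get nth_nseq; case: ifP.
Qed.

Definition lbcheck D (s : pred nat) : bool :=
  all (fun v => let k := count (fun w => s (w mod Nat.pow 2 D)) (nb D v) in
                if s v then k == 0 else (k == 0) || odd k) (iota 0 (2 ^ D)).

Lemma mod_lt D w : w mod Nat.pow 2 D < 2 ^ D.
Proof.
rewrite -pow2E; apply/ltP; apply: Nat.mod_upper_bound.
by apply: Nat.pow_nonzero.
Qed.

Lemma alpha_ge D (S : {set cube D}) : odd_independent (@cube_adj D) S -> #|S| <= alpha_od_Q D.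
Proof.
move=> HS; rewrite /alpha_od_Q /alpha_od.
exact: (leq_bigmax_cond (F := fun S : {set cube D} => #|S|)).
Qed.

Lemma lb_nat D s : lbcheck D s -> count s (iota 0 (2 ^ D)) <= alpha_od_Q D.
Proof.
move=> H.
pose S := [set x : cube D | [exists v : 'I_(2 ^ D), (dec D v == x) && s v]].
have memS w : (dec D w \in S) = s (w mod Nat.pow 2 D).
  rewrite inE; apply/existsP/idP => [[v /andP[/eqP e sv]]|sw].
    rewrite [dec D w]dec_mod in e; have := dec_inj (ltn_ord v) (mod_lt D w) e.
    by move=> <-.
  by exists (Ordinal (mod_lt D w)); rewrite /= -dec_mod eqxx sw.
have smod v : v < 2 ^ D -> v mod Nat.pow 2 D = v.
  by move=> hv; apply: Nat.mod_small; rewrite pow2E; apply/ltP.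
have HS : odd_independent (@cube_adj D) S.
  apply/odd_indepP; split => x; have [v hv <-] := dec_surj x;
  rewrite /nbrs_in nb_count memS smod //;
  rewrite (eq_count (a2 := fun w => s (w mod Nat.pow 2 D))); try (by move=> w; exact: memS);
  have := allP H v; rewrite mem_iota add0n hv => /(_ isT) /=.
    by move=> + sv; rewrite sv => /eqP.
  move=> + sv; rewrite (negbTE sv) => /orP [/eqP|]; by [left|right].
apply: leq_trans (alpha_ge HS); rewrite card_count.
apply: eq_leq; apply: eq_in_count => v; rewrite mem_iota add0n => /andP[_ hv].
by rewrite memS smod.
Qed.

Definition xorc d (y x : cube d) : cube d := [ffun i => x i (+) y i].

Lemma dec_lxor d v z : dec d (Nat.lxor v z) = xorc (dec d z) (dec d v).
Proof. apply/ffunP => i; rewrite /xorc !ffunE Nat.lxor_spec; by case: (Nat.testbit v i); case: (Nat.testbit z i). Qed.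

Lemma xorc_inj d (y : cube d) : injective (xorc y).
Proof.
move=> x1 x2 /ffunP H; apply/ffunP => i; have := H i; rewrite !ffunE.
by case: (x1 i) (x2 i) (y i) => [] [] [].
Qed.

Lemma count_trans d (S : {set cube d}) z :
  count (fun v => dec d (Nat.lxor v z) \in S) (iota 0 (2 ^ d)) = #|S|.
Proof.
rewrite -(card_preimset S (@xorc_inj d (dec d z))) card_count.
by apply: eq_count => v; rewrite inE dec_lxor.
Qed.

Lemma valid_of d (S : {set cube d}) : odd_independent (@cube_adj d) S ->
  valid d (fun v => dec d v \in S).
Proof.
move=> HS v; have [H1 H2] := (odd_indepP (@cube_adj d) S).1 HS.
have := H1 (dec d v); have := H2 (dec d v).
by rewrite /nbrs_in nb_count.
Qed.

Lemma valid_trans d s z : valid d s -> valid d (fun v => s (Nat.lxor v z)).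
Proof.
move=> V v.
have -> : count (fun v => s (Nat.lxor v z)) (nb d v) = count s (nb d (Nat.lxor v z)).
  rewrite /nb !count_map; apply: eq_count => i /=.
  by rewrite !Nat.lxor_assoc (Nat.lxor_comm (Nat.pow 2 i) z).
exact: V.
Qed.

Definition subsets4 : seq (seq nat) :=
 [:: [:: 0; 1; 2; 3]; [:: 0; 1; 2; 4]; [:: 0; 1; 2; 5]; [:: 0; 1; 3; 4]; [:: 0; 1; 3; 5]; [:: 0; 1; 4; 5]; [:: 0; 2; 3; 4]; [:: 0; 2; 3; 5]; [:: 0; 2; 4; 5]; [:: 0; 3; 4; 5]; [:: 1; 2; 3; 4]; [:: 1; 2; 3; 5]; [:: 1; 2; 4; 5]; [:: 1; 3; 4; 5]; [:: 2; 3; 4; 5]].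

Definition L6 (J : seq nat) : seq (nat * bool) :=
  (0, false) :: [seq (Nat.pow 2 i, false) | i <- iota 0 6] ++
  flatten [seq [seq (Nat.lxor (Nat.pow 2 i) (Nat.pow 2 j), true) | j <- iota 0 6 & j != i] | i <- J].
Definition init6 J := setl (nseq 64 None) (L6 J).
Definition popc v := count (fun i => Nat.testbit v i) (iota 0 6).
Definition ord6 := flatten [seq [seq v <- iota 0 64 | popc v == w] | w <- iota 0 7].

Lemma search6 : all (fun J => ~~ search 6 25 ord6 (init6 J)) subsets4.
Proof. by vm_compute. Qed.
Lemma sizes6 : all (fun J => size (init6 J) == 64) subsets4.
Proof. by vm_compute. Qed.
Lemma ord6_lt : all (fun v => v < 64) ord6.
Proof. by vm_compute. Qed.
Lemma subsets_lt : all (all (fun i => i < 6)) subsets4.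
Proof. by []. Qed.

Lemma subsets_ok (P : pred nat) : 3 < count P (iota 0 6) -> has (fun J => all P J) subsets4.
Proof.
rewrite /=.
by case: (P 0); case: (P 1); case: (P 2); case: (P 3); case: (P 4); case: (P 5).
Qed.

Lemma count_two (p : pred nat) (l : seq nat) x y : uniq l -> x \in l -> y \in l ->
  x != y -> ~~ p x -> ~~ p y -> count p l <= (size l).-2.
Proof.
move=> U xl yl nxy px py.
rewrite (permP (perm_to_rem xl)) /= (negbTE px) add0n.
have yr : y \in rem x l by rewrite (mem_rem_uniq x U) inE eq_sym nxy yl.
rewrite (permP (perm_to_rem yr)) /= (negbTE py) add0n.
apply: leq_trans (count_size _ _) _; by rewrite !size_rem.
Qed.

Lemma ub6 (S : {set cube 6}) : odd_independent (@cube_adj 6) S -> #|S| <= 24.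
Proof.
move=> HS; rewrite leqNgt; apply/negP => big.
have [z zZ kz] := ub6_case HS big.
have [z0 _ ez] := dec_surj z; subst z.
pose s v := dec 6 v \in S.
have V : valid 6 s := valid_of HS.
have cnt v : #|nbrs_in (@cube_adj 6) S (dec 6 v)| = count s (nb 6 v).
  by rewrite /nbrs_in nb_count.
move: zZ; rewrite inE => /andP[]; rewrite inE cnt => sz0 /eqP cz0.
pose P i := ~~ s (Nat.lxor z0 (Nat.pow 2 i)) && (count s (nb 6 (Nat.lxor z0 (Nat.pow 2 i))) == 5).
have hP : 3 < count P (iota 0 6).
  move: kz; rewrite nb_count /nb count_map.
  by rewrite (eq_count (a2 := P)) // => i; rewrite /P /= !inE cnt.
have [J JS HJ] := hasP (subsets_ok hP).
pose s' v := s (Nat.lxor v z0).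
have V' : valid 6 s' := valid_trans z0 V.
have C' : compat s' (init6 J).
  apply: compat_init => v b; rewrite /L6 in_cons => /orP [/eqP [-> ->]| ].
    by rewrite /s' Nat.lxor_0_l; exact: negbTE sz0.
  rewrite mem_cat => /orP [/mapP [i ii [-> ->]] | /flattenP [l /mapP [i iJ ->] /mapP [j]]].
    rewrite /s' Nat.lxor_comm; apply: negbTE.
    have : ~~ has s (nb 6 z0) by rewrite has_count cz0.
    by move/hasPn; apply; apply/mapP; exists i.
  rewrite mem_filter => /andP [ji jin] [-> ->].
  rewrite /s' (Nat.lxor_comm _ z0) -Nat.lxor_assoc.
  move/andP: (allP HJ i iJ) => [ti /eqP ct].
  have i6 : i \in iota 0 6 by rewrite mem_iota add0n (allP (allP subsets_lt J JS) i iJ).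
  case sj: (s _) => //; exfalso.
  pose p := fun k => s (Nat.lxor (Nat.lxor z0 (Nat.pow 2 i)) (Nat.pow 2 k)).
  have pi : ~~ p i.
    by rewrite /p Nat.lxor_assoc Nat.lxor_nilpotent Nat.lxor_0_r; exact: sz0.
  have pj : ~~ p j by rewrite /p sj.
  have nij : i != j by rewrite eq_sym.
  have := count_two (iota_uniq 0 6) i6 jin nij pi pj.
  have ct' : count p (iota 0 6) = 5 := ct.
  by rewrite ct' size_iota.
have := search_sound V' (tgt := 25) (N := 64) _ (ord := ord6) C'.
rewrite (eqP (allP sizes6 J JS)) ord6_lt (negbTE (allP search6 J JS)).
have -> : count s' (iota 0 64) = #|S| by exact: (count_trans S z0).
by move=> /(_ big erefl isT).
Qed.

Section Lift.
Variable d : nat.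
Local Notation n := d.+1.

Definition lo (x : cube (n + 2)) : cube n := [ffun i => x (lshift 2 i)].
Definition hi (x : cube (n + 2)) : cube 2 := [ffun k => x (rshift n k)].
Definition sg (h : cube 2) : bool := h ord0 (+) h ord_max.
Definition tw (b : bool) (u : cube n) : cube n := if b then flip u ord0 else u.
Definition phi x := tw (sg (hi x)) (lo x).
Definition join (u : cube n) (h : cube 2) : cube (n + 2) :=
  [ffun j => match split j with inl i => u i | inr k => h k end].
Definition psi (p : cube n * cube 2) := join (tw (sg p.2) p.1) p.2.

Lemma split_l (i : 'I_n) : split (lshift 2 i) = inl i.
Proof. exact: (unsplitK (inl i)). Qed.
Lemma split_r (k : 'I_2) : split (rshift n k) = inr k.
Proof. exact: (unsplitK (inr k)). Qed.

Lemma lo_join u h : lo (join u h) = u.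
Proof. by apply/ffunP => i; rewrite !ffunE split_l. Qed.
Lemma hi_join u h : hi (join u h) = h.
Proof. by apply/ffunP => i; rewrite !ffunE split_r. Qed.

Lemma join_lohi x : join (lo x) (hi x) = x.
Proof.
apply/ffunP => j; rewrite !ffunE; case: splitP => [i ei|k ei]; rewrite ffunE;
  congr (x _); apply: val_inj => /=; by rewrite ei.
Qed.

Lemma tw_inv b u : tw b (tw b u) = u.
Proof. by case: b => //=; exact: flipK. Qed.

Lemma lr_neq (i : 'I_n) (k : 'I_2) : (rshift n k == lshift 2 i) = false.
Proof. apply/negbTE; rewrite -val_eqE /=; have := ltn_ord i; lia. Qed.

Lemma lo_flip_l x i : lo (flip x (lshift 2 i)) = flip (lo x) i.
Proof. by apply/ffunP => j; rewrite !ffunE (inj_eq (@lshift_inj _ _)). Qed.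
Lemma hi_flip_l x i : hi (flip x (lshift 2 i)) = hi x.
Proof. by apply/ffunP => k; rewrite !ffunE lr_neq. Qed.
Lemma lo_flip_r x k : lo (flip x (rshift n k)) = lo x.
Proof. by apply/ffunP => i; rewrite !ffunE eq_sym lr_neq. Qed.
Lemma hi_flip_r x k : hi (flip x (rshift n k)) = flip (hi x) k.
Proof. by apply/ffunP => j; rewrite !ffunE (inj_eq (@rshift_inj _ _)). Qed.

Lemma sg_flip h k : sg (flip h k) = ~~ sg h.
Proof.
have [->|->] : k = ord0 \/ k = ord_max.
  by case: k => [[|[|]]] // Hk; [left|right]; apply: val_inj.
all: rewrite /sg !ffunE /=; by case: (h ord0); case: (h ord_max).
Qed.

Lemma phi_flip_l x i : phi (flip x (lshift 2 i)) = flip (phi x) i.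
Proof. rewrite /phi lo_flip_l hi_flip_l; case: sg => //=; exact: flipC. Qed.
Lemma phi_flip_r x k : phi (flip x (rshift n k)) = flip (phi x) ord0.
Proof. by rewrite /phi lo_flip_r hi_flip_r sg_flip; case: sg => //=; rewrite flipK. Qed.

Lemma phi_psi p : phi (psi p) = p.1.
Proof. by rewrite /phi /psi lo_join hi_join tw_inv. Qed.

Lemma psi_inj : injective psi.
Proof.
move=> [u1 h1] [u2 h2] e.
have := congr1 phi e; have := congr1 hi e; rewrite !phi_psi /psi !hi_join /=.
by move=> -> ->.
Qed.

Variable S : {set cube n}.
Hypothesis HS : odd_independent (@cube_adj n) S.
Definition S' := [set x | phi x \in S].

Lemma cnt_lift x : #|nbrs_in (@cube_adj (n + 2)) S' x| =
   #|nbrs_in (@cube_adj n) S (phi x)| + 2 * (flip (phi x) ord0 \in S).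
Proof.
rewrite /nbrs_in !card_nbA big_split_ord /=.
under eq_bigr => i _ do rewrite inE phi_flip_l.
under [X in _ + X = _]eq_bigr => k _ do rewrite inE phi_flip_r.
by rewrite sum_nat_const card_ord.
Qed.

Lemma f0 y : #|nbrs_in (@cube_adj n) S y| = 0 -> flip y ord0 \notin S.
Proof.
rewrite /nbrs_in card_nbA (bigD1 ord0) //=; apply: contra_eqN => ->.
by rewrite add1n.
Qed.

Lemma lift_ok : odd_independent (@cube_adj (n + 2)) S'.
Proof.
have [H1 H2] := (odd_indepP _ S).1 HS.
apply/odd_indepP; split => x; rewrite inE => hx; rewrite cnt_lift.
  by rewrite (H1 _ hx) (negbTE (f0 (H1 _ hx))).
case: (H2 _ hx) => [c0|co].
  by left; rewrite c0 (negbTE (f0 c0)).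
by right; rewrite oddD co; case: (_ \in S).
Qed.

Lemma card_lift : #|S'| = 4 * #|S|.
Proof.
have -> : S' = psi @: setX S setT.
  apply/setP => x; rewrite inE; apply/idP/imsetP => [xS|[[u h]]].
    exists (phi x, hi x); first by rewrite in_setX xS in_setT.
    by rewrite /psi /= /phi tw_inv join_lohi.
  by rewrite in_setX in_setT andbT /= => uS ->; rewrite phi_psi.
rewrite card_imset; last exact: psi_inj.
by rewrite cardsX cardsT card_cube mulnC.
Qed.
End Lift.

Lemma alpha_lift d : 4 * alpha_od_Q d.+1 <= alpha_od_Q (d.+1 + 2).
Proof.
rewrite {1}/alpha_od_Q /alpha_od.
apply: (big_ind (fun m => 4 * m <= alpha_od_Q (d.+1 + 2))) => //.
  by move=> x y hx hy; rewrite /maxn; case: ifP.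
move=> S HS; rewrite -(card_lift S); exact: alpha_ge (lift_ok HS).
Qed.

Lemma pascal_sum N k :
  \sum_(1 <= i < k.+1) 'C(N.+1, 2 * i - 1) = \sum_(0 <= j < 2 * k) 'C(N, j).
Proof.
elim: k => [|k IH]; first by rewrite !big_geq.
rewrite big_nat_recr // IH.
have -> : 2 * k.+1 - 1 = (2 * k).+1 by lia.
have -> : 2 * k.+1 = (2 * k).+2 by lia.
rewrite !big_nat_recr //=.
rewrite binS; lia.
Qed.

Lemma pow2_sum n : 2 ^ n = \sum_(0 <= j < n.+1) 'C(n, j).
Proof.
have := expnDn 1 1 n; rewrite addn1 => ->.
rewrite big_mkord; apply: eq_bigr => i _; by rewrite !exp1n !muln1.
Qed.

Lemma half_sum r : 2 * \sum_(0 <= j < r.+1) 'C(2 * r, j) = 2 ^ (2 * r) + 'C(2 * r, r).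
Proof.
have hle : r.+1 <= (2 * r).+1 by lia.
rewrite pow2_sum (big_cat_nat (leq0n r.+1) hle) /=.
have -> : \sum_(r.+1 <= i < (2 * r).+1) 'C(2 * r, i) = \sum_(0 <= j < r) 'C(2 * r, j).
  rewrite -{1}[r.+1]add0n big_addn.
  have -> : (2 * r).+1 - r.+1 = r by lia.
  rewrite (big_nat_rev _ _ 0) /=.
  apply: eq_big_nat => i /andP[_ hi].
  have -> : 0 + r - i.+1 + r.+1 = 2 * r - i by lia.
  by rewrite bin_sub //; lia.
rewrite big_nat_recr //=; lia.
Qed.

Lemma central r : 2 * 'C(2 * r.+1, r.+1) <= 2 ^ (2 * r.+1).
Proof.
elim: r => [|r IH]; first by [].
have e1 := mul_bin_diag (2 * r.+2) r.+1.
have e2 := mul_bin_diag (2 * r.+2).-1 r.+1.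
have e3 : 'C((2 * r.+2).-1, r.+2) = 'C((2 * r.+2).-1, r.+1).
  have h := @bin_sub ((2 * r.+2).-1) r.+1 ltac:(lia).
  by rewrite -h; congr 'C(_, _); lia.
rewrite (_ : (2 * r.+2).-1.-1 = 2 * r.+1) in e2; last by lia.
rewrite e3 in e2.
have -> : 2 ^ (2 * r.+2) = 4 * 2 ^ (2 * r.+1) by rewrite (_ : 2 * r.+2 = 2 + 2 * r.+1) ?expnD //; lia.
move: IH e1 e2; set X := 'C(2 * r.+2, r.+2); set Y := 'C((2 * r.+2).-1, r.+1);
  set W := 'C(2 * r.+1, r.+1); set P := 2 ^ (2 * r.+1) => IH e1 e2.
have hX : X = 2 * Y.
  apply/eqP; rewrite -(eqn_pmul2l (ltn0Sn r.+1)); apply/eqP.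
  rewrite -e1; lia.
have hY : Y <= 2 * W.
  rewrite -(leq_pmul2l (ltn0Sn r.+1)) -e2; nia.
lia.
Qed.

Lemma binom_bound k : 2 <= k ->
  32 * (\sum_(1 <= i < k.+1) 'C(4 * k - 1, 2 * i - 1)) <= 7 * 2 ^ (4 * k).
Proof.
move=> k2; set r := 2 * k - 1.
have e1 : 4 * k - 1 = (2 * r).+1 by rewrite /r; lia.
rewrite e1 pascal_sum.
have e2 : 2 * k = r.+1 by rewrite /r; lia.
rewrite e2.
have h := half_sum r.
have hc : 2 * 'C(2 * r, r) <= 2 ^ (2 * r).
  have -> : r = (r.-1).+1 by rewrite /r; lia.
  exact: central.
have e3 : 2 ^ (4 * k) = 4 * 2 ^ (2 * r).
  by rewrite (_ : 4 * k = 2 + 2 * r) ?expnD //; rewrite /r; lia.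
rewrite e3.
move: h hc; set A := \sum_(0 <= j < r.+1) _; set C := 'C(_, _); set P := 2 ^ (2 * r).
lia.
Qed.

Definition popcD D v := count (fun i => Nat.testbit v i) (iota 0 D).
Definition s4 v := popcD 4 v == 2.
Definition s8 v := ~~ odd (popcD 8 v) &&
  (foldr Nat.lxor 0 [seq i <- iota 0 8 | Nat.testbit v i] != 0).

Lemma lb4 : 6 <= alpha_od_Q 4.
Proof.
have h : lbcheck 4 s4 by vm_compute.
have e : count s4 (iota 0 (2 ^ 4)) = 6 by vm_compute.
by have := lb_nat h; rewrite e.
Qed.

Lemma lb8 : 112 <= alpha_od_Q 8.
Proof.
have h : lbcheck 8 s8 by vm_compute.
have e : count s8 (iota 0 (2 ^ 8)) = 112 by vm_compute.
by have := lb_nat h; rewrite e.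
Qed.

Lemma alpha_le D m : (forall S : {set cube D}, odd_independent (@cube_adj D) S -> #|S| <= m) ->
  alpha_od_Q D <= m.
Proof. by move=> H; apply/bigmax_leqP => S HS; exact: H. Qed.

Lemma a4 : alpha_od_Q 4 = 6.
Proof. by apply/eqP; rewrite eqn_leq lb4 andbT; apply: alpha_le; exact: ub4. Qed.

Lemma a6 : alpha_od_Q 6 = 24.
Proof.
apply/eqP; rewrite eqn_leq; apply/andP; split; first by apply: alpha_le; exact: ub6.
have := alpha_lift 3; rewrite a4; by [].
Qed.

Lemma a8 : alpha_od_Q 8 = 112.
Proof. by apply/eqP; rewrite eqn_leq lb8 andbT; apply: alpha_le; exact: ub8. Qed.

Lemma iii_m m : 7 * 2 ^ (8 + 2 * m) <= 16 * alpha_od_Q (8 + 2 * m).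
Proof.
elim: m => [|m IH]; first by rewrite addn0 a8.
have h := alpha_lift (7 + 2 * m).
rewrite (_ : (7 + 2 * m).+1 + 2 = 8 + 2 * m.+1) in h; last by lia.
rewrite (_ : (7 + 2 * m).+1 = 8 + 2 * m) in h; last by lia.
have e : 2 ^ (8 + 2 * m.+1) = 4 * 2 ^ (8 + 2 * m).
  by rewrite (_ : 8 + 2 * m.+1 = 2 + (8 + 2 * m)) ?expnD //; lia.
rewrite e; move: IH h; set A := alpha_od_Q _; set B := alpha_od_Q _; set P := 2 ^ _.
lia.
Qed.

Theorem proposition14 :
  (forall k : nat, 1 <= k ->
     2 * (\sum_(1 <= i < k.+1) 'C(4 * k - 1, 2 * i - 1)) <= alpha_od_Q (4 * k))
  /\ (alpha_od_Q 4 = 6 /\ alpha_od_Q 6 = 24 /\ alpha_od_Q 8 = 112)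
  /\ (forall d : nat, ~~ odd d -> 8 <= d -> 7 * 2 ^ d <= 16 * alpha_od_Q d).
Proof.
have iii : forall d : nat, ~~ odd d -> 8 <= d -> 7 * 2 ^ d <= 16 * alpha_od_Q d.
  move=> d de d8.
  have h := odd_double_half (d - 8).
  rewrite oddB // (negbTE de) /= -mul2n in h.
  have -> : d = 8 + 2 * (d - 8)./2 by lia.
  exact: iii_m.
split; last by split => //; split; [exact: a4|split; [exact: a6|exact: a8]].
move=> k k1.
case: (ltnP k 2) => k2.
  have -> : k = 1 by lia.
  by rewrite a4 big_nat1.
have := iii (4 * k); rewrite oddM /= => /(_ isT) h.
have h2 := binom_bound k2.
move: h2 h; set A := \sum_(1 <= i < k.+1) _; set B := alpha_od_Q _; set P := 2 ^ _.
have : 8 <= 4 * k by lia.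
move=> + h2 h; move=> /h {}h.
lia.
Qed.
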